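(* Let \textsc{Min-CSP} be a constraint satisfaction problem whose objective is to minimize the number of violated constraints, and let \textsc{Max-Comp-CSP} be the complementary problem of maximizing the number of satisfied constraints on the same instances. If there exists a PTAS for \textsc{Max-Comp-CSP} and a super robust algorithm for \textsc{Min-CSP}, then there exists a PTAS for \textsc{Min-CSP}.
   Context: For an instance with $C$ constraints, it is $(1-\varepsilon)$-satisfiable if some assignment satisfies at least $(1-\varepsilon)C$ constraints. A super robust algorithm for \textsc{Min-CSP} is a polynomial-time algorithm whose running time does not depend on $\varepsilon$ and which, on every $(1-\varepsilon)$-satisfiable instance with $C$ constraints, outputs an assignment violating at most $(\varepsilon+O(\varepsilon^2))C$ constraints (the constant in $O(\varepsilon^2)$ being independent of the instance). A PTAS for a minimization (resp. maximization) problem is a family of polynomial-time algorithms that, for every fixed $\tau>0$, output a solution of value at most $(1+\tau)$ (resp. at least $(1-\tau)$) times the optimum. *)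

(* Defs.v *)
From HB Require Import structures.
From mathcomp Require Import all_boot all_order all_algebra.
From mathcomp Require Import reals.
Set Implicit Arguments. Unset Strict Implicit. Unset Printing Implicit Defensive.
Import Order.TTheory GRing.Theory Num.Theory.
Local Open Scope ring_scope.

(* Min-CSP (minimize violated
   constraints) and Max-Comp-CSP (maximize satisfied constraints) live on the
   same instances. *)
Record CSP := {
  inst  : Type;
  asg   : inst -> finType;
  ncons : inst -> nat;
  sat   : forall i : inst, asg i -> 'I_(ncons i) -> bool }.

Section CSPDefs.
Variable P : CSP.

Definition nsat (i : inst P) (a : asg i) : nat :=
  #|[set j : 'I_(ncons i) | sat a j]|.
Definition nviol (i : inst P) (a : asg i) : nat :=
  #|[set j : 'I_(ncons i) | ~~ sat a j]|.

Definition algorithm := forall i : inst P, asg i.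

(* Abstract class [poly] of polynomial-time algorithms.  The only property
   used of it: running two polynomial-time algorithms, counting the violated
   constraints of both outputs, and returning the better one is again
   polynomial-time. *)
Definition select_closed (poly : algorithm -> Prop) : Prop :=
  forall A B : algorithm, poly A -> poly B ->
    poly (fun i => if (nviol (A i) <= nviol (B i))%N then A i else B i).

Variable R : realType.

Definition min_PTAS (poly : algorithm -> Prop) : Prop :=
  forall tau : R, 0 < tau -> exists A : algorithm, poly A /\
    forall (i : inst P) (a : asg i),
      (nviol (A i))%:R <= (1 + tau) * (nviol a)%:R.

Definition max_comp_PTAS (poly : algorithm -> Prop) : Prop :=
  forall tau : R, 0 < tau -> exists A : algorithm, poly A /\
    forall (i : inst P) (a : asg i),
      (1 - tau) * (nsat a)%:R <= (nsat (A i))%:R.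

Definition super_robust (poly : algorithm -> Prop) : Prop :=
  exists (K : R) (A : algorithm), poly A /\
    forall (i : inst P) (eps : R), 0 <= eps ->
      (exists a : asg i, (1 - eps) * (ncons i)%:R <= (nsat a)%:R) ->
      (nviol (A i))%:R <= (eps + K * eps ^+ 2) * (ncons i)%:R.

End CSPDefs.

(* Main.v *)
Require Import Defs.
From HB Require Import structures.
From mathcomp Require Import all_boot all_order all_algebra.
From mathcomp Require Import reals.
From mathcomp Require Import ring lra.
Import Order.TTheory GRing.Theory Num.Theory.

Lemma nsat_viol (P : CSP) (i : Defs.inst P) (x : asg i) :
  (nsat x + nviol x = Defs.ncons i)%N.
Proof.
rewrite /nsat /nviol.
have -> : [set j | ~~ sat x j] = ~: [set j | sat x j].
  by apply/setP => j; rewrite !inE.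
by rewrite cardsC card_ord.
Qed.

Arguments nsat_viol {P i} x.
Lemma nviol_le (P : CSP) (i : Defs.inst P) (x : asg i) : (nviol x <= Defs.ncons i)%N.
Proof. by rewrite -(nsat_viol x) leq_addl. Qed.

Arguments nviol_le {P i} x.
Local Open Scope ring_scope.

Theorem mainTheorem9 (R : realType) (P : CSP) (poly : algorithm P -> Prop) :
  select_closed poly ->
  max_comp_PTAS R poly ->
  super_robust R poly ->
  min_PTAS R poly.
Proof.
move=> Hsel Hmax [K [A [HA HArob]]] tau Htau.
pose M : R := `|K| + 1.
have HM : 0 < M by rewrite /M; have := normr_ge0 K; lra.
pose d := tau / M.
have Hd : 0 < d by rewrite /d divr_gt0.
have HMd : M * d = tau by rewrite /d mulrC -mulrA mulVf ?mulr1 // gt_eqF.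
have [B [HB HBb]] := Hmax (tau * d) (mulr_gt0 Htau Hd).
exists (fun i => if (nviol (A i) <= nviol (B i))%N then A i else B i).
split; first exact: Hsel.
move=> i a.
set S := (if _ then _ else _).
have HSA : (nviol S <= nviol (A i))%N.
  by rewrite /S; case: ifP => // /negbT; rewrite -ltnNge => /ltnW.
have HSB : (nviol S <= nviol (B i))%N.
  by rewrite /S; case: ifP.
move: HSA HSB; rewrite -!(ler_nat R) => HSA HSB.
have Ea := nsat_viol a; have EB := nsat_viol (B i).
have Eav : (nsat a)%:R = (Defs.ncons i)%:R - (nviol a)%:R :> R.
  by rewrite -Ea natrD; ring.
have EBv : (nsat (B i))%:R = (Defs.ncons i)%:R - (nviol (B i))%:R :> R.
  by rewrite -EB natrD; ring.
have Hva := nviol_le a.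
move: Hva; rewrite -(ler_nat R) => Hva.
have Hv0 : 0 <= (nviol a)%:R :> R by rewrite ler0n.
set c := (Defs.ncons i)%:R : R in Eav EBv Hva *.
set v := (nviol a)%:R : R in Eav Hva Hv0 *.
have HBi := HBb i a.
rewrite Eav EBv in HBi.
set nb := (nviol (B i))%:R : R in HBi HSB.
set na := (nviol (A i))%:R : R in HSA.
case: (lerP (tau * d * c) (tau * v)) => Hc.
  have : tau * d * (c - v) <= tau * d * c.
    have := mulr_gt0 Htau Hd; nra.
  lra.
have Hdv : v < d * c by rewrite -mulrA ltr_pM2l // in Hc.
have Hc0 : 0 < c.
  rewrite lt_neqAle ler0n andbT; apply/eqP => Hc0.
  by rewrite -Hc0 mulr0 in Hdv; lra.
pose e := v / c.
have Hve : v = e * c by rewrite /e -mulrA mulVf ?mulr1 // gt_eqF.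
have He0 : 0 <= e by rewrite /e divr_ge0 // ltW.
have Hed : e < d.
  by rewrite Hve ltr_pM2r // in Hdv.
have HAi := HArob i e He0.
have : na <= (e + K * e ^+ 2) * c.
  apply: HAi; exists a; rewrite Eav Hve; lra.
have HKe : K * e <= tau.
  have h1 : K * e <= `|K| * e by rewrite ler_wpM2r // ler_norm.
  have h2 : `|K| * e <= `|K| * d by rewrite ler_wpM2l // ltW.
  have h3 : `|K| * d <= M * d by rewrite ler_wpM2r ?ltW // /M; lra.
  lra.
have : (e + K * e ^+ 2) * c <= (1 + tau) * v.
  rewrite Hve.
  have : 0 <= e * c * (tau - K * e).
    by apply: mulr_ge0; [apply: mulr_ge0 => //; exact: ltW | rewrite subr_ge0].
  have -> : (e + K * e ^+ 2) * c = e * c + e * c * (K * e) by ring.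
  have -> : (1 + tau) * (e * c) = e * c + e * c * tau by ring.
  rewrite mulrBr; lra.
lra.
Qed.
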